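(* Let $f,g:[a,b]\to\mathbb{R}$, $a<b$, be convex functions such that $f$, $g$, $fg$ are integrable on $[a,b]$. Then \begin{align*} &\frac{g(b)}{(b-a)^2}\int_a^b (x-a)f(x)\,dx+\frac{g(a)}{(b-a)^2}\int_a^b (b-x)f(x)\,dx+\frac{f(b)}{(b-a)^2}\int_a^b (x-a)g(x)\,dx+\frac{f(a)}{(b-a)^2}\int_a^b (b-x)g(x)\,dx\\ &\le \frac{1}{b-a}\int_a^b f(x)g(x)\,dx+\frac13 M(a,b)+\frac16 N(a,b), \end{align*} where $M(a,b)=f(a)g(a)+f(b)g(b)$ and $N(a,b)=f(a)g(b)+f(b)g(a)$. *)

(* Defs.v *)
From Stdlib Require Import Reals.
Open Scope R_scope.

Definition convex_on (a b : R) (f : R -> R) : Prop :=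
  forall x y t, a <= x <= b -> a <= y <= b -> 0 <= t <= 1 ->
    f (t * x + (1 - t) * y) <= t * f x + (1 - t) * f y.

(* Main.v *)
Require Import Defs.
From Stdlib Require Import Reals Lra.
From Coquelicot Require Import Coquelicot.
Open Scope R_scope.

Theorem corollary2 (a b : R) (f g : R -> R) (hab : a < b)
  (hf : convex_on a b f) (hg : convex_on a b g)
  (If : Riemann_integrable f a b) (Ig : Riemann_integrable g a b)
  (Ifg : Riemann_integrable (fun x => f x * g x) a b)
  (I1 : Riemann_integrable (fun x => (x - a) * f x) a b)
  (I2 : Riemann_integrable (fun x => (b - x) * f x) a b)
  (I3 : Riemann_integrable (fun x => (x - a) * g x) a b)
  (I4 : Riemann_integrable (fun x => (b - x) * g x) a b) :
  g b / (b - a) ^ 2 * RiemannInt I1 + g a / (b - a) ^ 2 * RiemannInt I2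
  + f b / (b - a) ^ 2 * RiemannInt I3 + f a / (b - a) ^ 2 * RiemannInt I4
  <= 1 / (b - a) * RiemannInt Ifg
     + 1 / 3 * (f a * g a + f b * g b) + 1 / 6 * (f a * g b + f b * g a).
Proof.
  set (c := b - a).
  assert (hc : 0 < c) by (unfold c; lra).
  set (fa := f a). set (fb := f b). set (ga := g a). set (gb := g b).
  set (J1 := RiemannInt I1). set (J2 := RiemannInt I2). set (J3 := RiemannInt I3).
  set (J4 := RiemannInt I4). set (K := RiemannInt Ifg).
  assert (E1 : is_RInt (fun x => (x - a) * f x) a b J1)
    by (unfold J1; rewrite <- RInt_Reals; exact (RInt_correct _ _ _ (ex_RInt_Reals_1 _ _ _ I1))).
  assert (E2 : is_RInt (fun x => (b - x) * f x) a b J2)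
    by (unfold J2; rewrite <- RInt_Reals; exact (RInt_correct _ _ _ (ex_RInt_Reals_1 _ _ _ I2))).
  assert (E3 : is_RInt (fun x => (x - a) * g x) a b J3)
    by (unfold J3; rewrite <- RInt_Reals; exact (RInt_correct _ _ _ (ex_RInt_Reals_1 _ _ _ I3))).
  assert (E4 : is_RInt (fun x => (b - x) * g x) a b J4)
    by (unfold J4; rewrite <- RInt_Reals; exact (RInt_correct _ _ _ (ex_RInt_Reals_1 _ _ _ I4))).
  assert (EK : is_RInt (fun x => f x * g x) a b K)
    by (unfold K; rewrite <- RInt_Reals; exact (RInt_correct _ _ _ (ex_RInt_Reals_1 _ _ _ Ifg))).
  set (L := fun x => fa * ((b - x) * g x) + fb * ((x - a) * g x)
                    + ga * ((b - x) * f x) + gb * ((x - a) * f x)).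
  set (P := fun x => fa * ga * (b - x) ^ 2 + fb * gb * (x - a) ^ 2
                    + (fa * gb + fb * ga) * ((b - x) * (x - a))).
  set (Rf := fun x => c * (f x * g x) + / c * P x).
  set (F := fun x => - fa * ga * (b - x) ^ 3 / 3 + fb * gb * (x - a) ^ 3 / 3
                    + (fa * gb + fb * ga) * (c * (x - a) ^ 2 / 2 - (x - a) ^ 3 / 3)).
  assert (HL : is_RInt L a b (fa * J4 + fb * J3 + ga * J2 + gb * J1)).
  { apply (is_RInt_ext (fun x => plus (plus (plus (scal fa ((b - x) * g x))
             (scal fb ((x - a) * g x))) (scal ga ((b - x) * f x))) (scal gb ((x - a) * f x)))).
    { intros; reflexivity. }
    replace (fa * J4 + fb * J3 + ga * J2 + gb * J1) with
      (plus (plus (plus (scal fa J4) (scal fb J3)) (scal ga J2)) (scal gb J1)) by reflexivity.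
    apply (@is_RInt_plus R_NormedModule); [apply (@is_RInt_plus R_NormedModule); [apply (@is_RInt_plus R_NormedModule)|]|]; apply (@is_RInt_scal R_NormedModule); assumption. }
  assert (HP : is_RInt P a b (F b - F a)).
  { apply (is_RInt_derive F P).
    - intros x _. unfold F, P. auto_derive; auto. unfold c; field.
    - intros x _. apply (@ex_derive_continuous R_AbsRing R_NormedModule). unfold P. auto_derive. auto. }
  assert (HR : is_RInt Rf a b (c * K + / c * (F b - F a))).
  { apply (is_RInt_ext (fun x => plus (scal c (f x * g x)) (scal (/ c) (P x)))).
    { intros; reflexivity. }
    replace (c * K + / c * (F b - F a)) with (plus (scal c K) (scal (/ c) (F b - F a))) by reflexivity.
    apply (@is_RInt_plus R_NormedModule); apply (@is_RInt_scal R_NormedModule); assumption. }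
  assert (Hle : RInt L a b <= RInt Rf a b).
  { apply RInt_le.
    - lra.
    - eexists; exact HL.
    - eexists; exact HR.
    - intros x [hx1 hx2].
      set (t := (b - x) / c).
      assert (ht : 0 <= t <= 1).
      { unfold t; split.
        - apply Rdiv_le_0_compat; lra.
        - apply Rmult_le_reg_r with c; auto. unfold Rdiv. rewrite Rmult_assoc, Rinv_l by lra. unfold c; lra. }
      assert (hx : t * a + (1 - t) * b = x).
      { unfold t, c. field. lra. }
      assert (h1 : c * f x <= fa * (b - x) + fb * (x - a)).
      { pose proof (hf a b t ltac:(lra) ltac:(lra) ht) as H. rewrite hx in H.
        apply Rmult_le_compat_l with (r := c) in H; [|lra].
        eapply Rle_trans; [exact H|]. right. unfold t, fa, fb, c. field. lra. }
      assert (h2 : c * g x <= ga * (b - x) + gb * (x - a)).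
      { pose proof (hg a b t ltac:(lra) ltac:(lra) ht) as H. rewrite hx in H.
        apply Rmult_le_compat_l with (r := c) in H; [|lra].
        eapply Rle_trans; [exact H|]. right. unfold t, ga, gb, c. field. lra. }
      assert (h3 := Rmult_le_pos _ _ (Rge_le _ _ (Rge_minus _ _ (Rle_ge _ _ h1))) (Rge_le _ _ (Rge_minus _ _ (Rle_ge _ _ h2)))).
      unfold L, Rf, P.
      set (Q := fa * ga * (b - x) ^ 2 + fb * gb * (x - a) ^ 2 +
        (fa * gb + fb * ga) * ((b - x) * (x - a))).
      apply Rmult_le_reg_l with c; auto.
      replace (c * (c * (f x * g x) + / c * Q)) with (c * c * (f x * g x) + Q) by (field; lra).
      unfold Q. nra. }
  rewrite (is_RInt_unique _ _ _ _ HL), (is_RInt_unique _ _ _ _ HR) in Hle.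
  assert (HF : F b - F a = c ^ 3 * ((fa * ga + fb * gb) / 3 + (fa * gb + fb * ga) / 6)).
  { unfold F. replace (b - b) with 0 by ring. replace (a - a) with 0 by ring.
    fold c. replace (b - a) with c by reflexivity. field. }
  rewrite HF in Hle.
  apply Rmult_le_reg_l with (c ^ 2). { apply pow_lt; lra. }
  replace (c ^ 2 * (gb / c ^ 2 * J1 + ga / c ^ 2 * J2 + fb / c ^ 2 * J3 + fa / c ^ 2 * J4))
    with (fa * J4 + fb * J3 + ga * J2 + gb * J1) by (field; lra).
  eapply Rle_trans; [exact Hle|]. right. field. lra.
Qed.
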